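(* Let $T$ be a tree with a root $r$, and let $X\subseteq\|T\|$ be a subspace. Then $X$ is first countable if and only if every $x\in X\cap V(T)$ has only countably many children $t$ with $\lceil t\rceil\cap X\neq\emptyset$.
   Context: For a tree $T$, $\|T\|=V(T)\cup\Omega(T)$, where $\Omega(T)$ is the set of ends (equivalence classes of rays, two rays being equivalent if they share a tail). A region of $T$ is a connected subgraph $C$ with finitely many edges leaving it; $\|C\|$ is $V(C)$ together with the ends of $T$ having a ray in $C$; the sets $\|C\|$ for regions $C$ form a basis of the (compact Hausdorff) topology of $\|T\|$. The tree order: $u\le v$ if $u$ lies on the unique $r$–$v$ path in $T$. The children of $x$ are its neighbours $y$ with $y> x$. For a node $t$, $\lceil t\rceil$ denotes the set of nodes $v\ge t$ together with the ends of $T$ whose ray starting at $r$ passes through $t$. *)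

(* Defs.v *)
From Stdlib Require Import List.
Import ListNotations.
Set Implicit Arguments.

Section Trees.
Variable V : Type.
Variable adj : V -> V -> Prop.

Definition simple_graph : Prop :=
  (forall u v, adj u v -> adj v u) /\ (forall u, ~ adj u u).

Fixpoint walk (p : list V) : Prop :=
  match p with
  | [] => True
  | [_] => True
  | x :: ((y :: _) as q) => adj x y /\ walk q
  end.

Definition is_path (p : list V) (u v : V) : Prop :=
  NoDup p /\ walk p /\ head p = Some u /\ last p u = v /\ p <> [].

Definition is_cycle (p : list V) : Prop :=
  NoDup p /\ walk p /\ 3 <= length p /\
  exists x y, head p = Some x /\ last p x = y /\ adj y x.

Definition connected_graph : Prop := forall u v, exists p, is_path p u v.

Definition is_tree : Prop :=
  simple_graph /\ connected_graph /\ (forall p, ~ is_cycle p).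

Definition is_ray (R : nat -> V) : Prop :=
  (forall m n, R m = R n -> m = n) /\ (forall n, adj (R n) (R (S n))).

Definition ray_equiv (R S : nat -> V) : Prop :=
  exists m n, forall k, R (m + k) = S (n + k).

Definition is_end (E : (nat -> V) -> Prop) : Prop :=
  exists R, is_ray R /\ forall S, E S <-> (is_ray S /\ ray_equiv R S).

Definition tend := { E : (nat -> V) -> Prop | is_end E }.

Inductive tpoint := Vtx (v : V) | End (e : tend).

(* Regions, represented by their vertex set C (a connected subgraph of a tree
   is the induced subgraph on its vertex set): nonempty, connected, and only
   finitely many edges leave it. *)
Definition region (C : V -> Prop) : Prop :=
  (exists v, C v) /\
  (forall u v, C u -> C v -> exists p, is_path p u v /\ forall w, In w p -> C w) /\
  (exists l : list (V * V), forall u v, C u -> ~ C v -> adj u v -> In (u, v) l).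

Definition hull (C : V -> Prop) (x : tpoint) : Prop :=
  match x with
  | Vtx v => C v
  | End e => exists R, proj1_sig e R /\ forall n, C (R n)
  end.

Definition topen (U : tpoint -> Prop) : Prop :=
  forall x, U x -> exists C, region C /\ hull C x /\ forall y, hull C y -> U y.

Definition tle (r u v : V) : Prop := exists p, is_path p r v /\ In u p.

Definition child (r x y : V) : Prop := adj x y /\ tle r x y.

(* ⌈t⌉ : vertices v >= t and ends whose ray from r passes through t *)
Definition up (r t : V) (x : tpoint) : Prop :=
  match x with
  | Vtx v => tle r t v
  | End e => exists R, proj1_sig e R /\ R 0 = r /\ exists n, R n = t
  end.

End Trees.

(* A countable family
   is given as a sequence (repetitions allowed; nonempty since the whole space
   is open). *)
Definition first_countable (P : Type) (open : (P -> Prop) -> Prop)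
    (X : P -> Prop) : Prop :=
  forall x, X x ->
    exists B : nat -> P -> Prop,
      (forall n, open (B n) /\ B n x) /\
      (forall U, open U -> U x ->
         exists n, forall y, X y -> B n y -> U y).

Definition countable_set (A : Type) (S : A -> Prop) : Prop :=
  (forall a, ~ S a) \/ exists f : nat -> A, forall a, S a -> exists n, f n = a.

(* Main.v *)
Require Import Defs.
From Stdlib Require Import List Lia Classical ClassicalEpsilon Cantor PeanoNat.
Import ListNotations.
Set Implicit Arguments.

Section L.
Variable V : Type.
Variable adj : V -> V -> Prop.

Lemma last_cons2 (l : list V) a d : last (a :: l) d = last l a.
Proof.
  revert a d; induction l as [|b l IH]; intros a d; [reflexivity|].
  change (last (b :: l) d = last (b :: l) a). rewrite !IH. reflexivity.
Qed.

Lemma last_app_cons (l m : list V) x d : last (l ++ x :: m) d = last (x :: m) d.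
Proof.
  revert d; induction l as [|a l IH]; intro d; [reflexivity|].
  simpl app. rewrite last_cons2, IH, !last_cons2. reflexivity.
Qed.

Lemma last_in (l : list V) a d : In (last (a :: l) d) (a :: l).
Proof.
  revert a; induction l as [|b l IH]; intro a; [simpl; auto|].
  rewrite last_cons2, (last_cons2 l b a), <- (last_cons2 l b d). right. apply IH.
Qed.

Lemma walk_app (l m : list V) y :
  walk adj (l ++ y :: m) <-> walk adj (l ++ [y]) /\ walk adj (y :: m).
Proof.
  induction l as [|a l IH]; simpl.
  - destruct m; tauto.
  - destruct l as [|b l]; simpl in *.
    + destruct m; tauto.
    + rewrite IH. tauto.
Qed.

Lemma walk_tail a (l : list V) : walk adj (a :: l) -> walk adj l.
Proof. destruct l; simpl; tauto. Qed.

Lemma walk_cons2 a b (l : list V) : walk adj (a :: b :: l) <-> adj a b /\ walk adj (b :: l).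
Proof. simpl. tauto. Qed.

Lemma walk_prefix (l m : list V) : walk adj (l ++ m) -> walk adj l.
Proof.
  destruct m as [|y m]. { rewrite app_nil_r; auto. }
  intro H. apply walk_app in H. destruct H as [H _].
  destruct l as [|a l] using rev_ind; [simpl; auto|].
  rewrite <- app_assoc in H. simpl in H. apply walk_app in H. tauto.
Qed.

Lemma walk_suffix (l m : list V) : walk adj (l ++ m) -> walk adj m.
Proof.
  induction l as [|a l IH]; simpl; auto. intro H. apply IH. eapply walk_tail; eauto.
Qed.

Lemma walk_rev (Hs : forall u v, adj u v -> adj v u) (l : list V) :
  walk adj l -> walk adj (rev l).
Proof.
  induction l as [|a l IH]; simpl; auto. intro H.
  destruct l as [|b l]; simpl; auto.
  simpl in IH. destruct H as [Hab Hw]. specialize (IH Hw).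
  rewrite <- app_assoc. simpl. apply walk_app. split; auto.
  simpl. auto.
Qed.

Lemma first_common (p q : list V) :
  (exists z, In z p /\ In z q) ->
  exists A w P2 B Q2, p = A ++ w :: P2 /\ q = B ++ w :: Q2 /\
    forall y, In y A -> ~ In y q.
Proof.
  induction p as [|a p IH]; intros [z [Hz Hq]]; [destruct Hz|].
  destruct (classic (In a q)) as [Ha|Ha].
  - apply in_split in Ha. destruct Ha as [B [Q2 HB]].
    exists [], a, p, B, Q2. repeat split; auto.
  - destruct Hz as [Hz|Hz]; [subst; contradiction|].
    destruct IH as [A [w [P2 [B [Q2 [H1 [H2 H3]]]]]]]; [eauto|].
    exists (a :: A), w, P2, B, Q2. subst. repeat split; auto.
    intros y [Hy|Hy]; [subst; auto|auto].
Qed.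

End L.
Set Implicit Arguments.

Section U.
Variable V : Type.
Variable adj : V -> V -> Prop.
Hypothesis Hs : forall u v, adj u v -> adj v u.
Hypothesis Hirr : forall u, ~ adj u u.
Hypothesis Hnc : forall p, ~ is_cycle adj p.

Lemma path_unique : forall p0 q0 u, NoDup (u::p0) -> walk adj (u::p0) ->
  NoDup (u::q0) -> walk adj (u::q0) -> last (u::p0) u = last (u::q0) u -> p0 = q0.
Proof.
  induction p0 as [|a p1 IH]; intros q0 u Np Wp Nq Wq Hl.
  - destruct q0 as [|b q1]; auto. exfalso.
    change (u = last (u::b::q1) u) in Hl. rewrite last_cons2 in Hl.
    inversion Nq; subst. apply H1. rewrite Hl at 1. apply last_in.
  - destruct q0 as [|b q1].
    { exfalso. change (last (u::a::p1) u = u) in Hl. rewrite last_cons2 in Hl.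
      inversion Np; subst. apply H1. rewrite <- Hl at 1. apply last_in. }
    destruct (classic (a = b)) as [Hab|Hab].
    + subst b. f_equal. apply (IH q1 a).
      * inversion Np; auto.
      * eapply walk_tail; eauto.
      * inversion Nq; auto.
      * eapply walk_tail; eauto.
      * rewrite !last_cons2 in Hl. rewrite !last_cons2. auto.
    + exfalso.
      destruct (first_common (a :: p1) (b :: q1)) as [A [w [P2 [B [Q2 [E1 [E2 HA]]]]]]].
      { exists (last (a::p1) a). split; [apply last_in|].
        rewrite !last_cons2 in Hl. rewrite last_cons2, Hl, <- last_cons2 with (d:=b). apply last_in. }
      apply (@Hnc (u :: A ++ w :: rev B)).
      assert (NP : NoDup (A ++ w :: P2)) by (rewrite <- E1; inversion Np; auto).
      assert (NQ : NoDup (B ++ w :: Q2)) by (rewrite <- E2; inversion Nq; auto).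
      assert (UP : ~ In u (A ++ w :: P2)) by (rewrite <- E1; inversion Np; auto).
      assert (UQ : ~ In u (B ++ w :: Q2)) by (rewrite <- E2; inversion Nq; auto).
      assert (WB : walk adj (B ++ [w])).
      { apply walk_tail in Wq. rewrite E2 in Wq. apply walk_app in Wq. tauto. }
      assert (WA : walk adj (u :: A ++ [w])).
      { rewrite E1 in Wp. change (walk adj ((u :: A) ++ w :: P2)) in Wp.
        apply walk_app in Wp. tauto. }
      repeat split.
      * constructor.
        { intro H. apply in_app_or in H. destruct H as [H|[H|H]].
          - apply UP. apply in_or_app; auto.
          - apply UP. subst. apply in_or_app; right; left; auto.
          - apply UQ. apply in_rev in H. apply in_or_app; auto. }
        apply NoDup_app.
        { eapply NoDup_app_remove_r; eauto. }
        { constructor.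
          - intro H. apply in_rev in H. apply (NoDup_remove_2 _ _ _ NQ). apply in_or_app; auto.
          - apply NoDup_rev. eapply NoDup_app_remove_r; eauto. }
        intros y Hy [H|H].
        { subst. apply (NoDup_remove_2 _ _ _ NP). apply in_or_app; auto. }
        apply in_rev in H. apply (HA y Hy). rewrite E2. apply in_or_app; auto.
      * change (walk adj ((u :: A) ++ w :: rev B)). apply walk_app. split; auto.
        rewrite <- rev_unit. apply walk_rev; auto.
      * simpl. rewrite length_app. simpl. rewrite length_rev.
        destruct A as [|a' A]; destruct B as [|b' B]; simpl; try lia.
        simpl in E1, E2. inversion E1; inversion E2; subst. congruence.
      * exists u, (last (u :: A ++ w :: rev B) u). repeat split.
        assert (Hub : adj b u) by (apply Hs; simpl in Wq; tauto).
        destruct B as [|b' B].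
        { change (u :: A ++ w :: rev []) with ((u :: A) ++ [w]). rewrite last_last.
          simpl in E2. inversion E2. subst. exact Hub. }
        { simpl in E2. injection E2 as Hb Hq. rewrite Hb in Hub. simpl rev.
          replace (u :: A ++ w :: rev B ++ [b']) with ((u :: A ++ w :: rev B) ++ [b'])
            by (simpl; rewrite <- app_assoc; reflexivity).
          rewrite last_last. exact Hub. }
Qed.

End U.
Set Implicit Arguments.
Unset Strict Implicit.

Lemma nodup_disj {A : Type} (l m : list A) x : NoDup (l ++ m) -> In x l -> ~ In x m.
Proof.
  induction l as [|a l IH]; simpl; [tauto|]. intros H [Hx|Hx].
  - subst. inversion H; subst. intro Hm. apply H2. apply in_or_app; auto.
  - inversion H; auto.
Qed.

Section T.
Variable V : Type.
Variable adj : V -> V -> Prop.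
Hypothesis HT : is_tree adj.

Lemma Hs : forall u v, adj u v -> adj v u.
Proof. apply HT. Qed.
Lemma Hirr : forall u, ~ adj u u.
Proof. apply HT. Qed.
Lemma Hnc : forall p, ~ is_cycle adj p.
Proof. apply HT. Qed.
Lemma Hconn : forall u v, exists p, is_path adj p u v.
Proof. apply HT. Qed.

Lemma is_path_iff p u v : is_path adj p u v <->
  exists p0, p = u :: p0 /\ NoDup p /\ walk adj p /\ last p u = v.
Proof.
  split.
  - intros [N [W [H [L Ne]]]]. destruct p as [|a p0]; [congruence|].
    simpl in H. injection H as ->. exists p0. auto.
  - intros [p0 [-> [N [W L]]]]. repeat split; auto. congruence.
Qed.

Lemma path_uniq p q u v : is_path adj p u v -> is_path adj q u v -> p = q.
Proof.
  intros Hp Hq. apply is_path_iff in Hp, Hq.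
  destruct Hp as [p0 [-> [N1 [W1 L1]]]]. destruct Hq as [q0 [-> [N2 [W2 L2]]]].
  f_equal. apply (path_unique Hs Hnc N1 W1 N2 W2). congruence.
Qed.

Definition pth (s v : V) : list V :=
  proj1_sig (constructive_indefinite_description _ (Hconn s v)).

Lemma pth_spec s v : is_path adj (pth s v) s v.
Proof. unfold pth. destruct constructive_indefinite_description; auto. Qed.

Lemma pth_eq s v p : is_path adj p s v -> pth s v = p.
Proof. intro H. eapply path_uniq; eauto using pth_spec. Qed.

Lemma tle_iff s t v : tle adj s t v <-> In t (pth s v).
Proof.
  split.
  - intros [p [Hp Hin]]. rewrite (pth_eq Hp). auto.
  - intro H. exists (pth s v). split; auto using pth_spec.
Qed.

Lemma path_prefix P s v A w B : is_path adj P s v -> P = A ++ w :: B ->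
  is_path adj (A ++ [w]) s w.
Proof.
  intros Hp E. apply is_path_iff in Hp. destruct Hp as [p0 [E0 [N [W L]]]].
  assert (E' : P = (A ++ [w]) ++ B) by (rewrite E, <- app_assoc; auto).
  repeat split.
  - rewrite E' in N. eapply NoDup_app_remove_r; eauto.
  - rewrite E' in W. eapply walk_prefix; eauto.
  - destruct A; simpl in *; congruence.
  - apply last_last.
  - destruct A; discriminate.
Qed.

Lemma path_suffix P s v A w B : is_path adj P s v -> P = A ++ w :: B ->
  is_path adj (w :: B) w v.
Proof.
  intros Hp E. apply is_path_iff in Hp. destruct Hp as [p0 [E0 [N [W L]]]].
  repeat split.
  - rewrite E in N. eapply NoDup_app_remove_l; eauto.
  - rewrite E in W. eapply walk_suffix; eauto.
  - rewrite <- L, E, last_app_cons, !last_cons2. auto.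
  - discriminate.
Qed.

Lemma path_head P s v : is_path adj P s v -> In s P.
Proof. intro H. apply is_path_iff in H. destruct H as [p0 [-> _]]. left; auto. Qed.

Lemma path_last P s v : is_path adj P s v -> In v P.
Proof. intro H. apply is_path_iff in H. destruct H as [p0 [-> [_ [_ L]]]]. rewrite <- L. apply last_in. Qed.

Lemma tle_refl s v : tle adj s v v.
Proof. apply tle_iff. eapply path_last, pth_spec. Qed.

Lemma tle_root s v : tle adj s s v.
Proof. apply tle_iff. eapply path_head, pth_spec. Qed.

Lemma pth_split s v w : In w (pth s v) ->
  exists A B, pth s v = A ++ w :: B /\ pth s w = A ++ [w].
Proof.
  intro H. apply in_split in H. destruct H as [A [B E]]. exists A, B. split; auto.
  apply pth_eq. eapply path_prefix; eauto using pth_spec.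
Qed.

Lemma tle_trans s a b c : tle adj s a b -> tle adj s b c -> tle adj s a c.
Proof.
  rewrite !tle_iff. intros Ha Hb. destruct (pth_split Hb) as [A [B [E1 E2]]].
  rewrite E2 in Ha. rewrite E1. apply in_app_or in Ha. apply in_or_app.
  destruct Ha as [Ha|[Ha|[]]]; auto. subst; right; left; auto.
Qed.

Lemma path_after P s v A c B w : is_path adj P s v -> P = A ++ c :: B ->
  In w (c :: B) -> tle adj s c w.
Proof.
  intros Hp E [Hw|Hw]. { subst. apply tle_refl. }
  apply in_split in Hw. destruct Hw as [B1 [B2 EB]].
  exists ((A ++ c :: B1) ++ [w]). split.
  - apply (path_prefix (A:=A ++ c :: B1) (B:=B2) Hp). rewrite E, EB, <- app_assoc. reflexivity.
  - rewrite <- app_assoc. apply in_or_app. right. left. auto.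
Qed.

Lemma tle_antisym s a b : tle adj s a b -> tle adj s b a -> a = b.
Proof.
  intros H1 H2. rewrite tle_iff in H1, H2.
  destruct (pth_split H1) as [A [B [E1 E2]]]. rewrite E2 in H2.
  apply in_app_or in H2. destruct H2 as [H2|[H2|[]]]; auto.
  exfalso. pose proof (pth_spec s b) as Hp. apply is_path_iff in Hp.
  destruct Hp as [p0 [_ [N [_ L]]]]. rewrite E1 in N, L.
  rewrite last_app_cons in L.
  apply (nodup_disj N H2). rewrite <- L at 1. apply last_in.
Qed.

Lemma edge_pth s u v : adj u v ->
  pth s v = pth s u ++ [v] \/ pth s u = pth s v ++ [u].
Proof.
  intro Huv. pose proof (pth_spec s u) as Hp.
  destruct (classic (In v (pth s u))) as [Hin|Hin].
  - right. destruct (pth_split Hin) as [A [B [E1 E2]]]. rewrite E2, E1.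
    pose proof (path_suffix Hp E1) as Hsuf. apply is_path_iff in Hsuf.
    destruct Hsuf as [_ [_ [N [W L]]]].
    destruct B as [|b B].
    { simpl in L. subst. exfalso. exact (Hirr Huv). }
    destruct B as [|b' B].
    { simpl in L. subst. rewrite <- app_assoc. reflexivity. }
    exfalso. apply (@Hnc (v :: b :: b' :: B)). unfold is_cycle.
    split; [exact N|]. split; [exact W|]. split; [simpl; lia|].
    exists v, u. split; [reflexivity|]. split; [exact L|]. exact Huv.
  - left. apply pth_eq.
    apply is_path_iff in Hp. destruct Hp as [p0 [E [N [W L]]]].
    rewrite E. apply is_path_iff. exists (p0 ++ [v]). split; [reflexivity|]. rewrite E in Hin.
    split; [|split].
    + apply NoDup_app; auto.
      * rewrite <- E; auto.
      * constructor; auto. constructor.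
      * intros a Ha [Hb|[]]. subst. auto.
    + rewrite E in W, L.
      rewrite (app_removelast_last s (l := s :: p0)) by discriminate.
      rewrite (app_removelast_last s (l := s :: p0)) in W by discriminate.
      rewrite L in W |- *.
      rewrite <- app_assoc. apply walk_app. split; auto. simpl. auto.
    + change (last ((s :: p0) ++ [v]) s = v). apply last_last.
Qed.

End T.
Set Implicit Arguments.
Unset Strict Implicit.

Lemma not_nodup_split {A : Type} (l : list A) : ~ NoDup l ->
  exists P x Q R, l = P ++ x :: Q ++ x :: R.
Proof.
  induction l as [|a l IH]; intro H. { exfalso. apply H. constructor. }
  destruct (classic (In a l)) as [Ha|Ha].
  - apply in_split in Ha. destruct Ha as [Q [R E]]. exists [], a, Q, R. subst. reflexivity.
  - destruct IH as [P [x [Q [R E]]]].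
    { intro N. apply H. constructor; auto. }
    exists (a :: P), x, Q, R. subst. reflexivity.
Qed.

Lemma hd_rev_app {A : Type} (a : A) l m : hd_error (rev (a :: l) ++ m) = Some (last (a :: l) a).
Proof.
  rewrite (app_removelast_last a (l := a :: l)) at 1 by discriminate.
  rewrite rev_app_distr. reflexivity.
Qed.

Section R.
Variable V : Type.
Variable adj : V -> V -> Prop.
Hypothesis HT : is_tree adj.

Lemma shorten : forall n (l : list V), length l <= n -> l <> [] -> walk adj l ->
  exists p, NoDup p /\ walk adj p /\ hd_error p = hd_error l /\
    (forall d, last p d = last l d) /\ p <> [] /\ incl p l.
Proof.
  induction n as [|n IH]; intros l Hlen Hne W.
  { destruct l; simpl in *; [congruence|lia]. }
  destruct (classic (NoDup l)) as [N|N].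
  { exists l. repeat split; auto. intros x; auto. }
  destruct (not_nodup_split N) as [P [x [Q [R E]]]]. subst l.
  destruct (IH (P ++ x :: R)) as [p [N' [W' [H' [L' [Ne' I']]]]]].
  - rewrite length_app in *. simpl in *. rewrite length_app in Hlen. simpl in Hlen. lia.
  - destruct P; discriminate.
  - apply walk_app in W. destruct W as [W1 W2]. apply walk_app. split; auto.
    change (walk adj ((x :: Q) ++ x :: R)) in W2. apply walk_app in W2. tauto.
  - exists p. repeat split; auto.
    + rewrite H'. destruct P; reflexivity.
    + intro d. rewrite L', !last_app_cons.
      change (last (x :: R) d = last ((x :: Q) ++ x :: R) d). rewrite last_app_cons. auto.
    + intros y Hy. apply I' in Hy. apply in_app_or in Hy. apply in_or_app.
      destruct Hy as [Hy|[Hy|Hy]]; auto; right; [left; auto|right; apply in_or_app; right; right; auto].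
Qed.

Definition Dreg (s c : V) (Bad : V -> Prop) (v : V) : Prop :=
  tle adj s c v /\ forall t, Bad t -> ~ tle adj s t v.

Lemma Dreg_suffix s c Bad v w : Dreg s c Bad v ->
  (exists A B, pth HT s v = A ++ c :: B /\ In w (c :: B)) -> Dreg s c Bad w.
Proof.
  intros [H1 H2] [A [B [E Hw]]]. split.
  - eapply path_after; eauto using pth_spec.
  - intros t Bt Htw. apply (H2 t Bt). eapply (tle_trans HT); eauto.
    apply (tle_iff HT). rewrite E. apply in_or_app. right. exact Hw.
Qed.

Lemma Dreg_region s c Bad (L : list V) :
  (forall t, Bad t -> In t L) -> (forall t, Bad t -> ~ tle adj s t c) ->
  region adj (Dreg s c Bad).
Proof.
  intros HL Hc. split; [|split].
  - exists c. split; auto. apply (tle_refl HT).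
  - intros u v Hu Hv.
    assert (Suf : forall x, Dreg s c Bad x -> exists A B, pth HT s x = A ++ c :: B /\
        is_path adj (c :: B) c x /\ forall w, In w (c :: B) -> Dreg s c Bad w).
    { intros x Hx. pose proof (proj1 Hx) as Hcx. apply (tle_iff HT) in Hcx.
      apply in_split in Hcx. destruct Hcx as [A [B E]]. exists A, B. split; auto.
      split. { eapply path_suffix; eauto using pth_spec. }
      intros w Hw. apply (Dreg_suffix Hx). eauto. }
    destruct (Suf u Hu) as [Au [Bu [Eu [Pu Iu]]]].
    destruct (Suf v Hv) as [Av [Bv [Ev [Pv Iv]]]].
    destruct (@shorten (length (rev (c :: Bu) ++ Bv)) (rev (c :: Bu) ++ Bv)) as
      [p [N [W [H [Lp [Ne I]]]]]]; auto.
    + simpl. rewrite <- app_assoc. simpl. destruct (rev Bu); discriminate.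
    + simpl. rewrite <- app_assoc. simpl. apply walk_app. split.
      * change (walk adj (rev (c :: Bu))). apply walk_rev. { apply (Hs HT). }
        apply Pu.
      * apply Pv.
    + exists p. split.
      * split; auto. split; auto. split.
        { rewrite H, hd_rev_app. f_equal. apply Pu. }
        split; auto. rewrite Lp. simpl. rewrite <- app_assoc. simpl.
        rewrite last_app_cons. destruct Pv as [_ [_ [_ [Lv _]]]]. rewrite last_cons2.
        rewrite last_cons2 in Lv. auto.
      * intros w Hw. apply I in Hw. apply in_app_or in Hw. destruct Hw as [Hw|Hw].
        { apply Iu. apply in_rev. auto. }
        { apply Iv. right; auto. }
  - exists (map (fun w => (c, w)) (pth HT s c) ++
            flat_map (fun t => map (fun w => (w, t)) (pth HT s t)) L).
    intros u v Hu Hv Huv.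
    destruct (edge_pth HT s Huv) as [E|E].
    + apply in_or_app. right.
      assert (Hcv : tle adj s c v).
      { apply (tle_iff HT). rewrite E. apply in_or_app. left. apply (tle_iff HT), Hu. }
      assert (exists t, Bad t /\ tle adj s t v) as [t [Bt Ht]].
      { apply NNPP. intro Hn. apply Hv. split; auto. intros t Bt Ht. apply Hn; eauto. }
      apply (tle_iff HT) in Ht. rewrite E in Ht. apply in_app_or in Ht.
      destruct Ht as [Ht|[Ht|[]]].
      { exfalso. apply (proj2 Hu t Bt). apply (tle_iff HT). auto. }
      subst t. apply in_flat_map. exists v. split; auto.
      apply in_map_iff. exists u. split; auto. rewrite E. apply in_or_app. left.
      eapply path_last, pth_spec.
    + apply in_or_app. left.
      assert (Hcv : ~ tle adj s c v).
      { intro Hcv. apply Hv. split; auto. intros t Bt Htv. apply (proj2 Hu t Bt).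
        apply (tle_trans HT) with v; auto. apply (tle_iff HT). rewrite E.
        apply in_or_app. left. eapply path_last, pth_spec. }
      pose proof (proj1 Hu) as Hcu. apply (tle_iff HT) in Hcu. rewrite E in Hcu.
      apply in_app_or in Hcu. destruct Hcu as [Hcu|[Hcu|[]]].
      { exfalso. apply Hcv. apply (tle_iff HT). auto. }
      subst u. apply in_map_iff. exists v. split; auto.
      rewrite E. apply in_or_app. left. eapply path_last, pth_spec.
Qed.

End R.
Set Implicit Arguments.
Unset Strict Implicit.

Lemma max_exists (P : nat -> Prop) N : P 0 -> (forall n, N <= n -> ~ P n) ->
  exists m, P m /\ forall j, m < j -> ~ P j.
Proof.
  revert P; induction N as [|N IH]; intros P H0 HN.
  { exfalso. apply (HN 0); auto. }
  destruct (classic (P N)) as [HP|HP].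
  - exists N. split; auto.
  - apply IH; auto. intros n Hn. destruct (Nat.eq_dec n N); [subst; auto|]. apply HN. lia.
Qed.

Section Ray.
Variable V : Type.
Variable adj : V -> V -> Prop.

Lemma walk_nth (l : list V) d k : walk adj l -> S k < length l -> adj (nth k l d) (nth (S k) l d).
Proof.
  revert k; induction l as [|a l IH]; intros k W Hk; simpl in Hk; [lia|].
  destruct l as [|b l]; simpl in Hk; [lia|].
  destruct W as [Hab W]. destruct k as [|k]; simpl; auto.
  apply (IH k W). simpl. lia.
Qed.

Lemma ray_path R : is_ray adj R -> forall n, is_path adj (map R (seq 0 (S n))) (R 0) (R n).
Proof.
  intros [Hinj Hadj]. induction n as [|n IH].
  - repeat split; simpl; auto. constructor; auto. constructor. discriminate.
  - destruct IH as [N [W [H [L Ne]]]].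
    assert (E : map R (seq 0 (S (S n))) = map R (seq 0 (S n)) ++ [R (S n)]).
    { rewrite (seq_S (S n)), map_app. reflexivity. }
    rewrite E. split; [|split; [|split; [|split]]].
    + apply NoDup_app; auto. { constructor; auto. constructor. }
      intros a Ha [Hb|[]]. subst. apply in_map_iff in Ha. destruct Ha as [x [Hx Hin]].
      apply Hinj in Hx. apply in_seq in Hin. lia.
    + rewrite (seq_S n), map_app in W |- *. rewrite <- app_assoc. simpl.
      apply walk_app. split; auto. simpl. auto.
    + reflexivity.
    + apply last_last.
    + destruct (map R (seq 0 (S n))); discriminate.
Qed.

Lemma ray_tle R m n : is_ray adj R -> m <= n -> tle adj (R 0) (R m) (R n).
Proof.
  intros HR Hmn. exists (map R (seq 0 (S n))). split; [apply ray_path; auto|].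
  apply in_map. apply in_seq. lia.
Qed.

Lemma req_refl (R : nat -> V) : ray_equiv R R.
Proof. exists 0, 0. auto. Qed.

Lemma req_sym (R S : nat -> V) : ray_equiv R S -> ray_equiv S R.
Proof. intros [m [n H]]. exists n, m. intro k. auto. Qed.

Lemma req_trans (R S T : nat -> V) : ray_equiv R S -> ray_equiv S T -> ray_equiv R T.
Proof.
  intros [m1 [n1 H1]] [m2 [n2 H2]]. exists (m1 + m2), (n2 + n1). intro k.
  replace (m1 + m2 + k) with (m1 + (m2 + k)) by lia. rewrite H1.
  replace (n1 + (m2 + k)) with (m2 + (n1 + k)) by lia. rewrite H2. f_equal. lia.
Qed.

Lemma end_mem (e : tend adj) R S : proj1_sig e R ->
  (proj1_sig e S <-> is_ray adj S /\ ray_equiv R S).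
Proof.
  destruct e as [E [R0 [HR0 HE]]]. simpl. intro HR.
  apply HE in HR. destruct HR as [_ HR]. rewrite HE. split; intros [H1 H2]; split; auto.
  - eapply req_trans; eauto. apply req_sym; auto.
  - eapply req_trans; eauto.
Qed.

Lemma end_ray (e : tend adj) R : proj1_sig e R -> is_ray adj R.
Proof. intro H. apply (end_mem R H) in H. tauto. Qed.

Lemma end_nonempty (e : tend adj) : exists R, proj1_sig e R.
Proof.
  destruct e as [E [R0 [HR0 HE]]]. exists R0. simpl. apply HE. split; auto. apply req_refl.
Qed.

Lemma shift_ray R n : is_ray adj R -> is_ray adj (fun k => R (n + k)) /\ ray_equiv R (fun k => R (n + k)).
Proof.
  intros [Hi Ha]. split; [split|].
  - intros a b H. apply Hi in H. lia.
  - intro k. replace (n + S k) with (S (n + k)) by lia. auto.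
  - exists n, 0. auto.
Qed.

Lemma ray_fin R (L : list V) : is_ray adj R -> exists N, forall n, N <= n -> ~ In (R n) L.
Proof.
  intros [Hi _]. induction L as [|a L IH].
  { exists 0. intros n _ []. }
  destruct IH as [N HN].
  destruct (classic (exists i, R i = a)) as [[i Hi']|Hna].
  - exists (Nat.max N (S i)). intros n Hn [H|H].
    + subst. apply Hi in H. lia.
    + apply (HN n); auto. lia.
  - exists N. intros n Hn [H|H]; [apply Hna; eauto|]. apply (HN n); auto.
Qed.

Lemma common_tail (e : tend adj) R S : proj1_sig e R -> proj1_sig e S ->
  exists i j, forall k, S (i + k) = R (j + k).
Proof.
  intros HR HS. apply (end_mem S HR) in HS. destruct HS as [_ [m [n H]]].
  exists n, m. intro k. symmetry. auto.
Qed.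

End Ray.
Set Implicit Arguments.
Unset Strict Implicit.

Section RF.
Variable V : Type.
Variable adj : V -> V -> Prop.
Hypothesis HT : is_tree adj.

Lemma ray_from s R : is_ray adj R -> exists R', is_ray adj R' /\ R' 0 = s /\ ray_equiv R R'.
Proof.
  intro HR. set (Q := pth HT s (R 0)).
  destruct (ray_fin Q HR) as [N HN].
  destruct (@max_exists (fun j => In (R j) Q) N) as [m [Hm Hmax]]; auto.
  { eapply path_last, pth_spec. }
  apply in_split in Hm. destruct Hm as [A [B EQ]].
  pose proof (path_prefix (pth_spec HT s (R 0)) EQ) as HP.
  set (A' := A ++ [R m]) in *.
  destruct HP as [NA [WA [HA [LA _]]]].
  assert (LenA : length A' = S (length A)) by (unfold A'; rewrite length_app; simpl; lia).
  assert (InQ : forall x, In x A -> In x Q) by (intros x Hx; rewrite EQ; apply in_or_app; auto).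
  assert (NRm : ~ In (R m) A).
  { intro H. unfold A' in NA. apply (nodup_disj NA H). left; auto. }
  assert (NthM : nth (length A) A' s = R m) by (unfold A'; apply nth_middle).
  set (R' := fun k => if k <=? length A then nth k A' s else R (m + (k - length A))).
  destruct HR as [Hi Ha].
  exists R'. split; [split|split].
  - intros a b Hab. unfold R' in Hab.
    destruct (Nat.leb_spec a (length A)) as [Ha'|Ha'];
    destruct (Nat.leb_spec b (length A)) as [Hb'|Hb'].
    + eapply NoDup_nth; eauto; lia.
    + exfalso. assert (In (R (m + (b - length A))) A') as Hin.
      { rewrite <- Hab. apply nth_In. lia. }
      unfold A' in Hin. apply in_app_or in Hin. destruct Hin as [Hin|[Hin|[]]].
      * apply (Hmax (m + (b - length A))); [lia|]. auto.
      * apply Hi in Hin. lia.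
    + exfalso. assert (In (R (m + (a - length A))) A') as Hin.
      { rewrite Hab. apply nth_In. lia. }
      unfold A' in Hin. apply in_app_or in Hin. destruct Hin as [Hin|[Hin|[]]].
      * apply (Hmax (m + (a - length A))); [lia|]. auto.
      * apply Hi in Hin. lia.
    + apply Hi in Hab. lia.
  - intro k. unfold R'.
    destruct (Nat.leb_spec (S k) (length A)) as [H1|H1].
    + destruct (Nat.leb_spec k (length A)) as [H2|H2]; [|lia].
      apply walk_nth; auto. lia.
    + destruct (Nat.leb_spec k (length A)) as [H2|H2].
      * assert (k = length A) by lia. subst k. rewrite NthM.
        replace (m + (S (length A) - length A)) with (S m) by lia. auto.
      * replace (m + (S k - length A)) with (S (m + (k - length A))) by lia. auto.
  - unfold R'. simpl. destruct A' as [|x A''] eqn:EA; [discriminate|]. simpl in HA |- *. congruence.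
  - exists m, (length A). intro k. unfold R'.
    destruct (Nat.leb_spec (length A + k) (length A)) as [H1|H1].
    + assert (k = 0) by lia. subst k. rewrite !Nat.add_0_r, NthM. auto.
    + f_equal. lia.
Qed.

End RF.
Set Implicit Arguments.
Unset Strict Implicit.

Section M.
Variable V : Type.
Variable adj : V -> V -> Prop.
Hypothesis HT : is_tree adj.

Lemma hull_open (C : V -> Prop) : region adj C -> topen (hull (adj:=adj) C).
Proof. intros HC y Hy. exists C. auto. Qed.

Lemma exit (C : V -> Prop) : forall l x, walk adj (x :: l) -> C x -> ~ C (last (x :: l) x) ->
  exists a b, adj a b /\ C a /\ ~ C b /\ In b l.
Proof.
  induction l as [|y l IH]; intros x W Cx Cl. { contradiction. }
  destruct (classic (C y)) as [Cy|Cy].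
  - assert (W' : walk adj (y :: l)) by (eapply walk_tail; eauto).
    assert (Cl' : ~ C (last (y :: l) y)) by (rewrite !last_cons2 in Cl; rewrite !last_cons2; auto).
    destruct (IH y W' Cy Cl') as [a [b [H1 [H2 [H3 H4]]]]].
    exists a, b. split; [auto|split; [auto|split; [auto|right; auto]]].
  - exists x, y. destruct W as [W _]. split; [auto|split; [auto|split; [auto|left; auto]]].
Qed.

Lemma exit_path (C : V -> Prop) P s w A c B : is_path adj P s w -> P = A ++ c :: B ->
  C c -> ~ C w -> exists a b, adj a b /\ C a /\ ~ C b /\ In b B.
Proof.
  intros Hp E Cc Cw. pose proof (path_suffix Hp E) as Hs'. destruct Hs' as [_ [W [_ [L _]]]].
  apply (exit (C:=C) (l:=B) (x:=c)); auto. congruence.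
Qed.

Lemma pth_last_split s x : exists A, pth HT s x = A ++ [x].
Proof.
  pose proof (pth_spec HT s x) as [_ [_ [_ [L Ne]]]].
  exists (removelast (pth HT s x)). rewrite <- L at 3. apply app_removelast_last. auto.
Qed.

Lemma child_pth s x t : child adj s x t -> pth HT s t = pth HT s x ++ [t].
Proof.
  intros [Hxt Htle]. destruct (edge_pth HT s Hxt) as [E|E]; auto.
  exfalso. assert (tle adj s t x).
  { apply (tle_iff HT). rewrite E. apply in_or_app. left. eapply path_last, pth_spec. }
  assert (x = t) by (eapply (tle_antisym HT); eauto). subst. exact (Hirr HT Hxt).
Qed.

Lemma child_split s x t v : child adj s x t -> tle adj s t v ->
  exists A B, pth HT s v = A ++ x :: t :: B.
Proof.
  intros Hc Htv. apply (tle_iff HT) in Htv. destruct (pth_split Htv) as [A1 [B1 [E1 E2]]].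
  rewrite (child_pth Hc) in E2. apply app_inj_tail in E2. destruct E2 as [E2 _].
  destruct (pth_last_split s x) as [Ax Ex]. exists Ax, B1. rewrite E1, <- E2, Ex, <- app_assoc. auto.
Qed.

Lemma child_exists s x v : tle adj s x v -> v <> x -> exists t, child adj s x t /\ tle adj s t v.
Proof.
  intros Hxv Hne. apply (tle_iff HT) in Hxv. apply in_split in Hxv. destruct Hxv as [A [B E]].
  pose proof (path_suffix (pth_spec HT s v) E) as Hp.
  destruct B as [|t B].
  { destruct Hp as [_ [_ [_ [L _]]]]. simpl in L. congruence. }
  exists t. split; [split|].
  - destruct Hp as [_ [W _]]. destruct W; auto.
  - apply (path_after HT (pth_spec HT s v) (A := A) (c := x) (B := t :: B)); auto. right; left; auto.
  - apply (path_after HT (pth_spec HT s v) (A := A ++ [x]) (c := t) (B := B)).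
    + rewrite E, <- app_assoc. auto.
    + destruct Hp as [_ [_ [_ [L _]]]]. rewrite <- L, last_cons2.
      apply last_in.
Qed.

Lemma child_not_le s x t : child adj s x t -> ~ tle adj s t x.
Proof.
  intros [Hxt H1] H2. assert (x = t) by (eapply (tle_antisym HT); eauto). subst. exact (Hirr HT Hxt).
Qed.

End M.
Set Implicit Arguments.
Unset Strict Implicit.

Section F.
Variable V : Type.
Variable adj : V -> V -> Prop.
Hypothesis HT : is_tree adj.

Lemma fwd r (X : tpoint adj -> Prop) : first_countable (@topen V adj) X ->
  forall x : V, X (@Vtx V adj x) ->
     countable_set (fun t : V =>
       @child V adj r x t /\ exists p : tpoint adj, @up V adj r t p /\ X p).
Proof.
  intros Hfc x Hx. destruct (Hfc _ Hx) as [B [HB1 HB2]].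
  assert (Hex : forall n, exists Cl : (V -> Prop) * list (V * V), fst Cl x /\
     (forall y, hull (fst Cl) y -> B n y) /\
     forall u v, fst Cl u -> ~ fst Cl v -> adj u v -> In (u,v) (snd Cl)).
  { intro n. destruct (HB1 n) as [Ho Hbx]. destruct (Ho _ Hbx) as [C [[_ [_ [l Hl]]] [HCx HCsub]]].
    exists (C, l). simpl. auto. }
  set (F := fun n => proj1_sig (constructive_indefinite_description _ (Hex n))).
  assert (HF : forall n, fst (F n) x /\
     (forall y, hull (fst (F n)) y -> B n y) /\
     forall u v, fst (F n) u -> ~ fst (F n) v -> adj u v -> In (u,v) (snd (F n))).
  { intro n. exact (proj2_sig (constructive_indefinite_description _ (Hex n))). }
  set (g := fun k => let (n, k2) := of_nat k in let (j, i) := of_nat k2 in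
             nth i (pth HT r (snd (nth j (snd (F n)) (r, r)))) r).
  right. exists g. intros t [Hch [p [Hup HXp]]].
  assert (Htr : ~ tle adj r t r).
  { intro H. assert (t = r) by (apply (tle_antisym HT H); apply (tle_root HT)).
    subst. apply (child_not_le HT Hch). apply (tle_root HT). }
  set (D := Dreg adj r r (fun z => z = t)).
  assert (HD : region adj D).
  { apply (Dreg_region HT (L := [t])); [intros z ->; left; auto | intros z ->; auto]. }
  assert (HDx : D x).
  { split; [apply (tle_root HT)| intros z ->; apply (child_not_le HT); auto]. }
  destruct (HB2 (hull D) (hull_open HD) HDx) as [n Hn].
  assert (HnD : ~ hull D p).
  { destruct p as [v|e]; simpl in Hup |- *.
    - intros [_ H]. apply (H t eq_refl). auto.
    - intros [S [HS HSD]]. destruct Hup as [R [HR [HR0 [m0 Hm0]]]].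
      destruct (common_tail HR HS) as [i [j Hij]].
      apply (proj2 (HSD (i + m0)) t eq_refl). rewrite Hij, <- Hm0, <- HR0.
      apply ray_tle; [eapply end_ray; eauto | lia]. }
  destruct (HF n) as [HFx [HFsub HFl]].
  assert (HnB : ~ hull (fst (F n)) p).
  { intro H. apply HnD. apply Hn; auto. }
  set (C := fst (F n)) in *.
  assert (exists w, tle adj r t w /\ ~ C w) as [w [Htw HCw]].
  { destruct p as [v|e]; simpl in Hup.
    - exists v. split; auto.
    - apply NNPP. intro Hno. apply HnB. destruct Hup as [R [HR [HR0 [m0 Hm0]]]].
      pose proof (end_ray HR) as HRr. destruct (shift_ray m0 HRr) as [Hsr Heq].
      exists (fun k => R (m0 + k)). split.
      + apply (end_mem _ HR). auto.
      + intro k. apply NNPP. intro Hk. apply Hno. exists (R (m0 + k)). split; auto.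
        rewrite <- Hm0, <- HR0. apply ray_tle; auto. lia. }
  destruct (child_split HT Hch Htw) as [A [B' EA]].
  destruct (exit_path (C := C) (pth_spec HT r w) (A := A) (c := x) (B := t :: B') EA HFx HCw)
    as [a [b [Hab [Ca [Cb Hb]]]]].
  assert (Htb : tle adj r t b).
  { apply (path_after HT (pth_spec HT r w) (A := A ++ [x]) (c := t) (B := B')); auto.
    rewrite EA, <- app_assoc. auto. }
  assert (Hl : In (a, b) (snd (F n))) by (apply HFl; auto).
  apply (tle_iff HT) in Htb.
  destruct (In_nth _ _ (r, r) Hl) as [j [Hj Ej]].
  destruct (In_nth _ _ r Htb) as [i [Hi Ei]].
  exists (to_nat (n, to_nat (j, i))). unfold g. rewrite cancel_of_to. cbv beta iota.
  rewrite cancel_of_to. cbv beta iota. rewrite Ej. exact Ei.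
Qed.

End F.
Set Implicit Arguments.
Unset Strict Implicit.

Lemma list_bound {V : Type} (P : V -> Prop) (g : nat -> V) (L : list V) :
  (forall t, P t -> exists n, g n = t) ->
  exists N, forall t, In t L -> P t -> exists i, i < N /\ g i = t.
Proof.
  intro Hg. induction L as [|a L IH].
  { exists 0. intros t []. }
  destruct IH as [N HN].
  destruct (classic (P a)) as [Pa|Pa].
  - destruct (Hg a Pa) as [k Hk]. exists (Nat.max N (S k)).
    intros t [<-|Ht] Pt.
    + exists k. split; auto. lia.
    + destruct (HN t Ht Pt) as [i [Hi Hgi]]. exists i. split; auto. lia.
  - exists N. intros t [<-|Ht] Pt; [contradiction|]. auto.
Qed.

Section B.
Variable V : Type.
Variable adj : V -> V -> Prop.
Hypothesis HT : is_tree adj.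

Lemma bwd r (X : tpoint adj -> Prop) :
  (forall x : V, X (@Vtx V adj x) ->
     countable_set (fun t : V =>
       @child V adj r x t /\ exists p : tpoint adj, @up V adj r t p /\ X p)) ->
  first_countable (@topen V adj) X.
Proof.
  intros Hc y Hy. destruct y as [x|e].
  -
    set (Sx := fun t : V => child adj r x t /\ exists p : tpoint adj, up r t p /\ X p).
    assert (exists g : nat -> V, forall t, Sx t -> exists n, g n = t) as [g Hg].
    { destruct (Hc x Hy) as [Hemp|[g Hg]].
      - exists (fun _ => r). intros t Ht. exfalso. apply (Hemp t Ht).
      - exists g. exact Hg. }
    set (Bad := fun n t => child adj r x t /\ exists i, i < n /\ g i = t).
    set (D := fun n => Dreg adj r x (Bad n)).
    assert (HDr : forall n, region adj (D n)).
    { intro n. apply (Dreg_region HT (L := map g (seq 0 n))).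
      - intros t [_ [i [Hi <-]]]. apply in_map. apply in_seq. lia.
      - intros t [Hch _]. apply (child_not_le HT Hch). }
    exists (fun n => hull (D n)). split.
    + intro n. split; [apply hull_open; auto|]. simpl. split; [apply (tle_refl HT)|].
      intros t [Hch _]. apply (child_not_le HT Hch).
    + intros U HU HUx. destruct (HU _ HUx) as [C [[_ [_ [l Hl]]] [HCx HCU]]].
      simpl in HCx.
      set (L' := flat_map (fun ed => pth HT r (snd ed)) l).
      destruct (list_bound L' Hg) as [N HN].
      exists N. intros y HXy HyD. apply HCU.
      assert (K : forall t v, child adj r x t -> tle adj r t v -> ~ In t L' -> C v).
      { intros t v Hch Htv HnL. destruct (child_split HT Hch Htv) as [A [B' E]].
        apply NNPP; intro Hv.
        destruct (exit_path (C:=C) (pth_spec HT r v) E HCx Hv) as [a [b [Hab [Ca [Cb Hb]]]]].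
        assert (Htb : tle adj r t b).
        { apply (path_after HT (pth_spec HT r v) (A := A ++ [x]) (c := t) (B := B')); auto.
          rewrite E, <- app_assoc. auto. }
        apply HnL. apply in_flat_map. exists (a, b). split; [apply Hl; auto|].
        simpl. apply (tle_iff HT). auto. }
      assert (K2 : forall t, child adj r x t -> (exists p, up r t p /\ X p) ->
                 (exists v, tle adj r t v /\ D N v) -> ~ In t L').
      { intros t Hch Hup [v [Htv HDv]] HtL.
        destruct (HN t HtL (conj Hch Hup)) as [i [Hi Hgi]].
        apply (proj2 HDv t (conj Hch (ex_intro _ i (conj Hi Hgi)))). auto. }
      destruct y as [v|e'].
      * simpl in HyD |- *. destruct (classic (v = x)) as [->|Hne]; auto.
        destruct (child_exists HT (proj1 HyD) Hne) as [t [Hch Htv]].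
        apply (K t v Hch Htv). apply (K2 t Hch).
        -- exists (Vtx adj v). split; auto.
        -- exists v; auto.
      * simpl in HyD |- *. destruct HyD as [R' [HR' HR'D]].
        destruct (ray_from HT r (end_ray HR')) as [Rr [HRr [HRr0 Heq]]].
        assert (HRre : proj1_sig e' Rr) by (apply (end_mem _ HR'); auto).
        destruct (common_tail HR' HRre) as [i [j Hij]].
        assert (HxRi : tle adj r x (Rr i)).
        { pose proof (proj1 (HR'D (j + 0))) as H. rewrite <- Hij, Nat.add_0_r in H. auto. }
        apply (tle_iff HT) in HxRi.
        pose proof (pth_eq HT (ray_path HRr i)) as Ep. rewrite HRr0 in Ep. rewrite Ep in HxRi.
        apply in_map_iff in HxRi. destruct HxRi as [i0 [Hi0 Hi0s]].
        assert (Htk : forall k, S i0 <= k -> tle adj r (Rr (S i0)) (Rr k)).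
        { intros k Hk. rewrite <- HRr0. apply ray_tle; auto. }
        assert (Hch : child adj r x (Rr (S i0))).
        { split.
          - rewrite <- Hi0. apply HRr.
          - rewrite <- Hi0, <- HRr0. apply ray_tle; auto. }
        assert (HnL : ~ In (Rr (S i0)) L').
        { apply (K2 _ Hch).
          - exists (End e'). split; auto. exists Rr. split; auto. split; auto. eauto.
          - exists (Rr (i + S i0)). split; [apply Htk; lia|]. rewrite Hij. auto. }
        destruct (shift_ray (S i0) HRr) as [Hsr Hse].
        exists (fun k => Rr (S i0 + k)). split.
        -- apply (end_mem _ HRre). auto.
        -- intro k. apply (K _ _ Hch); auto. apply Htk. lia.
  -
    destruct (end_nonempty e) as [R HR]. pose proof (end_ray HR) as HRr.
    set (D := fun n => Dreg adj (R 0) (R n) (fun _ => False)).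
    assert (HDr : forall n, region adj (D n)).
    { intro n. apply (Dreg_region HT (L := [])); intros t []. }
    exists (fun n => hull (D n)). split.
    + intro n. split; [apply hull_open; auto|]. simpl.
      destruct (shift_ray n HRr) as [Hsr Hse].
      exists (fun k => R (n + k)). split.
      * apply (end_mem _ HR). auto.
      * intro k. split; [apply ray_tle; auto; lia| intros t []].
    + intros U HU HUe. destruct (HU _ HUe) as [C [[_ [_ [l Hl]]] [HCe HCU]]].
      simpl in HCe. destruct HCe as [S [HS HSC]].
      destruct (common_tail HR HS) as [i [j Hij]].
      set (L := flat_map (fun ed => pth HT (R 0) (snd ed)) l).
      destruct (ray_fin L HRr) as [N0 HN0].
      exists (Nat.max N0 j). set (n := Nat.max N0 j).
      assert (HCRn : C (R n)).
      { replace n with (j + (n - j)) by lia. rewrite <- Hij. auto. }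
      assert (HDC : forall w, D n w -> C w).
      { intros w [Hw _]. apply NNPP; intro Cw. apply (tle_iff HT) in Hw.
        apply in_split in Hw. destruct Hw as [A [B E]].
        destruct (exit_path (C:=C) (pth_spec HT (R 0) w) E HCRn Cw) as [a [b [Hab [Ca [Cb Hb]]]]].
        assert (Htb : tle adj (R 0) (R n) b).
        { apply (path_after HT (pth_spec HT (R 0) w) (A := A) (c := R n) (B := B)); auto.
          right; auto. }
        apply (HN0 n); [lia|]. apply in_flat_map. exists (a, b). split; [apply Hl; auto|].
        simpl. apply (tle_iff HT). auto. }
      intros y HXy Hy2. apply HCU. destruct y as [v|e']; simpl in *; auto.
      destruct Hy2 as [S' [HS' HS'D]]. exists S'. split; auto.
Qed.

End B.

Unset Implicit Arguments.
Set Strict Implicit.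

Theorem lemma3p2 (V : Type) (adj : V -> V -> Prop) (r : V)
    (HT : is_tree adj) (X : tpoint adj -> Prop) :
  first_countable (@topen V adj) X <->
  (forall x : V, X (@Vtx V adj x) ->
     countable_set (fun t : V =>
       @child V adj r x t /\ exists p : tpoint adj, @up V adj r t p /\ X p)).
Proof.
  split.
  - apply (fwd HT).
  - apply (bwd HT).
Qed.
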